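(* Let $A$ be an $n\times n$ matrix with a designated set of large positions, and let $(X,Y)$ be a $q$-good restriction having a $p$-strong line, where $0\le p<1$. Let $m=|X|$ and $\varrho=2q/(1-p)$. If $m\ge6$, $(1-p)m>1$, $2\varrho m>1$ and $\varrho\le1/2$, then that line is in fact $(q+3\varrho)$-strong for $(X,Y)$.
   Context: Let $A=(a_{ij})_{i,j\in[n]}$ with a designated set $L\subseteq[n]\times[n]$ of large positions. A restriction is $(X,Y)$ with $X,Y\subseteq[n]$, $|X|=|Y|$; a generalized diagonal of $A[X,Y]$ is $\{(i,\sigma(i)):i\in X\}$ for a bijection $\sigma:X\to Y$, random meaning uniform $\sigma$; it is good if it contains exactly one large position; $(X,Y)$ is $q$-good if a random generalized diagonal is good with probability $\ge1-q$. For $i\in X$, row $i$ is $p$-strong for $(X,Y)$ if at least $(1-p)|Y|$ of the positions $\{(i,j):j\in Y\}$ are large; column $j\in Y$ is $p$-strong if at least $(1-p)|X|$ of $\{(i,j):i\in X\}$ are large. A $p$-strong line is a $p$-strong row or column. *)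

(* Defs.v *)
From HB Require Import structures.
From mathcomp Require Import all_boot all_order all_algebra.
Set Implicit Arguments. Unset Strict Implicit. Unset Printing Implicit Defensive.
Import Order.TTheory GRing.Theory Num.Theory.
Local Open Scope ring_scope.

Section Defs.
Variable n : nat.
Local Notation pos := ('I_n * 'I_n)%type.

(* A generalized diagonal of A[X,Y]: the graph {(i, sigma i) : i in X} of a
   bijection sigma : X -> Y, represented as a set of positions.  Graphs of
   bijections X -> Y are in one-to-one correspondence with bijections, so the
   uniform distribution on bijections is the uniform distribution on these sets. *)
Definition is_gdiag (X Y : {set 'I_n}) (D : {set pos}) : bool :=
  [&& D \subset setX X Y,
      [forall x in X, #|[set y | (x, y) \in D]| == 1%N] &
      [forall y in Y, #|[set x | (x, y) \in D]| == 1%N]].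

Definition gdiags (X Y : {set 'I_n}) : {set {set pos}} :=
  [set D | is_gdiag X Y D].

Definition good_diag (L : {set pos}) (D : {set pos}) : bool :=
  #|D :&: L| == 1%N.

Definition prob_good (R : numFieldType) (L : {set pos}) (X Y : {set 'I_n}) : R :=
  (#|[set D in gdiags X Y | good_diag L D]|)%:R / (#|gdiags X Y|)%:R.

Definition restriction (X Y : {set 'I_n}) : Prop := #|X| = #|Y|.

Definition q_good (R : numFieldType) (q : R) (L : {set pos}) (X Y : {set 'I_n}) : Prop :=
  restriction X Y /\ 1 - q <= prob_good R L X Y.

(* A line: a row (inl i) or a column (inr j). *)
Definition line := ('I_n + 'I_n)%type.

Definition strong_line (R : numFieldType) (p : R) (L : {set pos})
  (X Y : {set 'I_n}) (l : line) : Prop :=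
  match l with
  | inl i => i \in X /\
      (1 - p) * (#|Y|)%:R <= (#|[set j in Y | (i, j) \in L]|)%:R
  | inr j => j \in Y /\
      (1 - p) * (#|X|)%:R <= (#|[set i in X | (i, j) \in L]|)%:R
  end.
End Defs.

(* Main.v *)
Require Import Defs.
From HB Require Import structures.
From mathcomp Require Import all_boot all_order all_algebra perm.
From mathcomp Require Import zify ring lra.
Import Order.TTheory GRing.Theory Num.Theory.
Set Implicit Arguments. Unset Strict Implicit. Unset Printing Implicit Defensive.


Section Basic.
Variable n : nat.
Local Notation pos := ('I_n * 'I_n)%type.

Definition colf (D : {set pos}) (x : 'I_n) : 'I_n := odflt x [pick y | (x, y) \in D].
Definition of_fun (X : {set 'I_n}) (f : 'I_n -> 'I_n) : {set pos} :=
  [set u : pos | (u.1 \in X) && (u.2 == f u.1)].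

Variables (X Y : {set 'I_n}).

Lemma gd_col D x : is_gdiag X Y D -> x \in X -> (x, colf D x) \in D.
Proof.
case/and3P=> _ /forall_inP H _ xX.
have /cards1P [y Hy] := H x xX.
rewrite /colf; case: pickP => [z //|/(_ y) F].
have : y \in [set y0 | (x, y0) \in D] by rewrite Hy set11.
by rewrite inE F.
Qed.

Lemma gd_mem D u : is_gdiag X Y D -> (u \in D) = (u.1 \in X) && (u.2 == colf D u.1).
Proof.
move=> G; apply/idP/idP.
- move=> uD; have := G; case/and3P=> /subsetP sub /forall_inP H _.
  have := sub u uD; rewrite [u]surjective_pairing in_setX => /andP [u1X _].
  rewrite u1X /=.
  have /cards1P [y Hy] := H _ u1X.
  have h1 : u.2 \in [set y0 | (u.1, y0) \in D] by rewrite inE -surjective_pairing.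
  have h2 : colf D u.1 \in [set y0 | (u.1, y0) \in D] by rewrite inE gd_col.
  by rewrite Hy !inE in h1 h2; rewrite (eqP h1) (eqP h2).
- case/andP=> u1X /eqP e; rewrite [u]surjective_pairing e; exact: gd_col.
Qed.

Lemma gd_of_fun D : is_gdiag X Y D -> D = of_fun X (colf D).
Proof. by move=> G; apply/setP=> u; rewrite inE gd_mem. Qed.

Lemma gd_colY D x : is_gdiag X Y D -> x \in X -> colf D x \in Y.
Proof.
move=> G xX; have := G; case/and3P=> /subsetP sub _ _.
by have := sub _ (gd_col G xX); rewrite in_setX => /andP [].
Qed.

Lemma gd_inj D : is_gdiag X Y D -> {in X &, injective (colf D)}.
Proof.
move=> G x1 x2 x1X x2X e.
have := G; case/and3P=> _ _ /forall_inP H.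
have yY := gd_colY G x1X.
have /cards1P [z Hz] := H _ yY.
have h1 : x1 \in [set x | (x, colf D x1) \in D] by rewrite inE gd_col.
have h2 : x2 \in [set x | (x, colf D x1) \in D] by rewrite inE e gd_col.
by rewrite Hz !inE in h1 h2; rewrite (eqP h1) (eqP h2).
Qed.

Lemma img_eq f : {in X, forall x, f x \in Y} -> {in X &, injective f} -> #|X| = #|Y| ->
  [set f x | x in X] = Y.
Proof.
move=> fY finj c; apply/eqP; rewrite eqEcard card_in_imset // c leqnn andbT.
by apply/subsetP=> y /imsetP [x xX ->]; apply: fY.
Qed.

Lemma of_fun_gd f : {in X, forall x, f x \in Y} -> {in X &, injective f} -> #|X| = #|Y| ->
  is_gdiag X Y (of_fun X f).
Proof.
move=> fY finj c; apply/and3P; split.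
- by apply/subsetP=> u; rewrite !inE => /andP [u1X /eqP ->]; rewrite u1X fY.
- apply/forall_inP=> x xX; apply/cards1P; exists (f x); apply/setP=> y.
  by rewrite !inE /= xX.
- apply/forall_inP=> y yY; apply/cards1P.
  have := yY; rewrite -(img_eq fY finj c) => /imsetP [x0 x0X ->].
  exists x0; apply/setP=> x; rewrite !inE /=.
  apply/idP/idP.
  + by case/andP=> xX /eqP e; apply/eqP; apply: finj => //; rewrite e.
  + by move/eqP->; rewrite x0X eqxx.
Qed.

Lemma col_of_fun f x : x \in X -> colf (of_fun X f) x = f x.
Proof.
move=> xX; rewrite /colf; case: pickP => [y|/(_ (f x))].
- by rewrite inE /= xX => /eqP.
- by rewrite inE /= xX eqxx.
Qed.

Lemma of_fun_eq f g : {in X, f =1 g} -> of_fun X f = of_fun X g.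
Proof.
move=> e; apply/setP=> u; rewrite !inE.
by case u1X: (u.1 \in X) => //=; rewrite e.
Qed.

End Basic.


Lemma part_card (T : finType) (A : {set T}) (P : pred T) :
  #|[set x in A | P x]| + #|[set x in A | ~~ P x]| = #|A|.
Proof.
rewrite -(cardID P A); congr (_ + _); apply: eq_card => x; rewrite !inE //.
by rewrite andbC.
Qed.

Lemma card_pairs (T1 T2 : finType) (A : {set T1}) (F : T1 -> {set T2}) :
  #|[set u : T1 * T2 | (u.1 \in A) && (u.2 \in F u.1)]| = \sum_(a in A) #|F a|.
Proof.
rewrite -sum1_card.
rewrite (eq_bigr (fun a => \sum_(b in F a) 1)); last by move=> a _; rewrite sum1_card.
rewrite pair_big_dep /=; apply: eq_bigl => u; rewrite inE.
by [].
Qed.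

Section Core.
Variable n : nat.
Local Notation pos := ('I_n * 'I_n)%type.
Variables (X Y : {set 'I_n}) (L : {set pos}) (i : 'I_n).
Hypothesis c : #|X| = #|Y|.
Hypothesis iX : i \in X.

Let S := [set j in Y | (i, j) \in L].
Let Diag := gdiags X Y.
Let sw (D : {set pos}) r := of_fun X (colf D \o tperm i r).
Let phi (u : {set pos} * 'I_n) := (sw u.1 u.2, u.2).

Lemma SY : S \subset Y.
Proof. by apply/subsetP=> j; rewrite inE => /andP []. Qed.

Lemma inDiag D : (D \in Diag) = is_gdiag X Y D.
Proof. by rewrite inE. Qed.

Lemma tpX r x : r \in X -> x \in X -> tperm i r x \in X.
Proof. by move=> rX xX; case: tpermP => // ->. Qed.

Lemma sw_gd D r : D \in Diag -> r \in X -> sw D r \in Diag.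
Proof.
rewrite !inDiag => G rX; apply: of_fun_gd => //.
- by move=> x xX /=; apply: (gd_colY G); apply: tpX.
- move=> x1 x2 x1X x2X /= e; apply: (perm_inj (s := tperm i r)).
  by apply: (gd_inj G) => //; apply: tpX.
Qed.

Lemma sw_col D r x : x \in X -> colf (sw D r) x = colf D (tperm i r x).
Proof. by move=> xX; rewrite /sw col_of_fun. Qed.

Lemma sw_inv D r : D \in Diag -> r \in X -> sw (sw D r) r = D.
Proof.
rewrite inDiag => G rX; rewrite [RHS](gd_of_fun G) /sw; apply: of_fun_eq => x xX /=.
by rewrite col_of_fun ?tpX //= tpermK.
Qed.

Lemma card_pre D (S' : {set 'I_n}) : D \in Diag -> S' \subset Y ->
  #|[set r in X | colf D r \in S']| = #|S'|.
Proof.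
rewrite inDiag => G sS.
rewrite -(card_in_imset (f := colf D)); last first.
  by move=> x1 x2; rewrite !inE => /andP [x1X _] /andP [x2X _]; apply: (gd_inj G).
congr #|pred_of_set _|; apply/setP=> y; apply/imsetP/idP.
- by case=> x; rewrite inE => /andP [_ h] ->.
- move=> yS; have := subsetP sS _ yS.
  rewrite -(img_eq (fun x xX => gd_colY G xX) (gd_inj G) c) => /imsetP [x xX e].
  by exists x => //; rewrite inE xX -e.
Qed.

Let DT := [set D in Diag | colf D i \notin S].
Let DS := [set D in Diag | colf D i \in S].
Let Pset := [set u : {set pos} * 'I_n |
   (u.1 \in DT) && (u.2 \in [set r in X | colf u.1 r \in S])].
Let Qset := [set u : {set pos} * 'I_n |
   (u.1 \in DS) && (u.2 \in [set r in X | colf u.1 r \in Y :\: S])].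

Lemma inDT D : (D \in DT) = (D \in Diag) && (colf D i \notin S).
Proof. by rewrite /DT inE. Qed.
Lemma inDS D : (D \in DS) = (D \in Diag) && (colf D i \in S).
Proof. by rewrite /DS inE. Qed.
Lemma inP u : (u \in Pset) = [&& u.1 \in DT, u.2 \in X & colf u.1 u.2 \in S].
Proof. by rewrite /Pset !inE. Qed.
Lemma inQ u : (u \in Qset) = [&& u.1 \in DS, u.2 \in X & colf u.1 u.2 \in Y :\: S].
Proof. rewrite /Qset inE; case: (u.1 \in DS) => //=; apply: (in_set (fun r => (r \in X) && (colf u.1 r \in Y :\: S))). Qed.

Lemma phiK u : u.1 \in Diag -> u.2 \in X -> phi (phi u) = u.
Proof. by case: u => D r /= DD rX; rewrite /phi /= sw_inv. Qed.

Lemma phi_inj (A : {set {set pos} * 'I_n}) :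
  (forall u, u \in A -> (u.1 \in Diag) && (u.2 \in X)) -> {in A &, injective phi}.
Proof.
move=> h u v uA vA e.
have /andP [u1 u2] := h u uA; have /andP [v1 v2] := h v vA.
by rewrite -(phiK u1 u2) -(phiK v1 v2) e.
Qed.

Lemma YS_sub : Y :\: S \subset Y.
Proof. exact: subsetDl. Qed.

Lemma cardYS : #|Y :\: S| = #|Y| - #|S|.
Proof. by rewrite cardsD (setIidPr SY). Qed.

Lemma card_P : #|Pset| = #|S| * #|DT|.
Proof.
have -> : #|Pset| = \sum_(a in DT) #|[set r in X | colf a r \in S]| by exact: card_pairs.
rewrite (eq_bigr (fun _ => #|S|)); last first.
  by move=> D; rewrite inE => /andP [DD _]; rewrite card_pre // SY.
by rewrite sum_nat_const mulnC.
Qed.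

Lemma card_Q : #|Qset| = (#|Y| - #|S|) * #|DS|.
Proof.
have -> : #|Qset| = \sum_(a in DS) #|[set r in X | colf a r \in Y :\: S]| by exact: card_pairs.
rewrite (eq_bigr (fun _ => #|Y| - #|S|)); last first.
  by move=> D; rewrite inE => /andP [DD _]; rewrite card_pre ?cardYS // YS_sub.
by rewrite sum_nat_const mulnC.
Qed.

Lemma QP : #|Qset| <= #|Pset|.
Proof.
rewrite -(card_in_imset (f := phi)); last first.
  by apply: phi_inj => u; rewrite inQ inDS => /and3P [/andP [-> _] -> _].
apply: subset_leq_card; apply/subsetP=> v /imsetP [[D r]].
rewrite inQ inDS /= => /and3P [/andP [DD DiS] rX] /setDP [rY nS] ->.
rewrite inP inDT /phi /= sw_gd // rX !sw_col // tpermL tpermR nS DiS.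
by [].
Qed.

Let GT := [set D in DT | good_diag L D].
Let BS := [set D in DS | ~~ good_diag L D].
Let inner D := [set r in X | (colf D r \in S) && ~~ good_diag L (sw D r)].
Let Pb := [set u : {set pos} * 'I_n | (u.1 \in GT) && (u.2 \in inner u.1)].
Let Qb := [set u : {set pos} * 'I_n |
   (u.1 \in BS) && (u.2 \in [set r in X | colf u.1 r \in Y :\: S])].

Lemma inGT D : (D \in GT) = (D \in DT) && good_diag L D.
Proof. by rewrite /GT inE. Qed.
Lemma inBS D : (D \in BS) = (D \in DS) && ~~ good_diag L D.
Proof. by rewrite /BS inE. Qed.
Lemma inInner D r : (r \in inner D) = [&& r \in X, colf D r \in S & ~~ good_diag L (sw D r)].
Proof. by rewrite /inner inE. Qed.
Lemma inPb u : (u \in Pb) = (u.1 \in GT) && (u.2 \in inner u.1).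
Proof. by rewrite /Pb inE. Qed.
Lemma inQb u : (u \in Qb) = [&& u.1 \in BS, u.2 \in X & colf u.1 u.2 \in Y :\: S].
Proof. rewrite /Qb inE; case: (u.1 \in BS) => //=; apply: (in_set (fun r => (r \in X) && (colf u.1 r \in Y :\: S))). Qed.

Lemma card_Qb : #|Qb| = (#|Y| - #|S|) * #|BS|.
Proof.
have -> : #|Qb| = \sum_(a in BS) #|[set r in X | colf a r \in Y :\: S]| by exact: card_pairs.
rewrite (eq_bigr (fun _ => #|Y| - #|S|)); last first.
  move=> D; rewrite inBS inDS => /andP [/andP [DD _] _].
  by rewrite card_pre ?cardYS // YS_sub.
by rewrite sum_nat_const mulnC.
Qed.

Lemma inner_big D : D \in GT -> #|S|.-1 <= #|inner D|.
Proof.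
rewrite inGT inDT => /andP [/andP [DD nS] /cards1P [w Hw]].
have DG : is_gdiag X Y D by rewrite -inDiag.
have wDL : w \in D :&: L by rewrite Hw set11.
move: wDL; rewrite inE => /andP [wD wL].
have := wD; rewrite (gd_mem _ DG) => /andP [w1X /eqP w2].
have w1i : w.1 != i.
  apply/eqP=> e; move: nS; rewrite inE (gd_colY DG iX) /=.
  by rewrite -e -w2 -surjective_pairing wL.
rewrite -(card_pre DD SY).
rewrite (cardsD1 w.1).
suff : [set r in X | colf D r \in S] :\ w.1 \subset inner D.
  by move=> /subset_leq_card h; case: (w.1 \in [set r in X | colf D r \in S]) => /=; rewrite ?add0n //; apply: leq_trans (leq_pred _) h.
apply/subsetP=> r /setD1P [rw]; rewrite inE => /andP [rX rS].
rewrite inInner rX rS /= /good_diag.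
have sub : [set (i, colf D r); w] \subset sw D r :&: L.
  apply/subsetP=> u; rewrite !inE => /orP [] /eqP ->.
    rewrite /= iX /= tpermL eqxx /=.
    by move: rS; rewrite inE => /andP [_ ->].
  rewrite w1X /= wL andbT tpermD //; first by rewrite w2.
  by rewrite eq_sym.
move/subset_leq_card: sub; rewrite cards2.
have -> : (i, colf D r) != w by apply/eqP=> e; move: w1i; rewrite -e eqxx.
by move=> h; apply/negP=> /eqP e; rewrite e in h.
Qed.

Lemma PbQb : #|S|.-1 * #|GT| <= (#|Y| - #|S|) * #|BS|.
Proof.
rewrite -card_Qb.
have -> : #|S|.-1 * #|GT| = \sum_(a in GT) #|S|.-1 by rewrite sum_nat_const mulnC.
apply: (@leq_trans #|Pb|).
  have -> : #|Pb| = \sum_(a in GT) #|inner a| by exact: card_pairs.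
  by apply: leq_sum => D; apply: inner_big.
rewrite -(card_in_imset (f := phi)); last first.
  apply: phi_inj => u; rewrite inPb inGT inDT inInner.
  by case/andP => /andP [/andP [-> _] _] /and3P [-> _ _].
apply: subset_leq_card; apply/subsetP=> v /imsetP [[D r]].
rewrite inPb inGT inDT inInner /= => /andP [/andP [/andP [DD nS] _] /and3P [rX rS bad]] ->.
have DG : is_gdiag X Y D by rewrite -inDiag.
rewrite inQb inBS inDS /phi /= sw_gd // rX bad !sw_col // tpermL tpermR rS /=.
by rewrite inE nS (gd_colY DG iX).
Qed.

Lemma core :
  (#|X| - #|S|) * #|S|.-1 * #|Diag| <= #|X| * #|X|.-1 * #|[set D in Diag | ~~ good_diag L D]|.
Proof.
set m := #|X|; set k := #|S|.
have kY : k <= m by rewrite /k /m c; apply: subset_leq_card SY.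
have hN : #|DT| + #|DS| = #|Diag|.
  rewrite -(part_card Diag (fun D => colf D i \notin S)); congr (_ + _).
  by apply: eq_card => D; rewrite /DS !inE negbK.
have hT : #|GT| + #|[set D in DT | ~~ good_diag L D]| = #|DT| by exact: part_card.
have hB : #|[set D in DT | ~~ good_diag L D]| + #|BS| = #|[set D in Diag | ~~ good_diag L D]|.
  rewrite -(part_card [set D in Diag | ~~ good_diag L D] (fun D => colf D i \notin S)).
  congr (_ + _); apply: eq_card => D.
    by rewrite /DT !inE; case: (is_gdiag X Y D); case: ((colf D i \in Y) && _); case: good_diag.
  by rewrite /BS /DS !inE; case: (is_gdiag X Y D); case: ((colf D i \in Y) && _); case: good_diag.
have ha : (m - k) * #|DS| <= k * #|DT|.
  by rewrite -card_P /m c -card_Q; apply: QP.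
have hb : k.-1 * #|GT| <= (m - k) * #|BS| by rewrite /m c; apply: PbQb.
move: hN hT hB ha hb.
set N := #|Diag|; set NT := #|DT|; set NS := #|DS|; set G := #|GT|.
set BT := #|[set D in DT | ~~ good_diag L D]|; set B := #|[set D in Diag | ~~ good_diag L D]|.
set b := #|BS| => hN hT hB ha hb.
have h1 : (m - k) * N <= m * NT.
  rewrite -hN mulnDr.
  have -> : m * NT = (m - k) * NT + k * NT by rewrite -mulnDl subnK.
  by rewrite leq_add2l.
have h2 : k.-1 * NT <= m.-1 * B.
  have [k0|kpos] := posnP k; first by rewrite k0 mul0n.
  rewrite -hT -hB mulnDr mulnDr addnC.
  apply: leq_add.
    apply: leq_mul => //; rewrite /k; lia.
  apply: leq_trans hb _; apply: leq_mul => //; lia.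
apply: (@leq_trans (k.-1 * (m * NT))).
  by rewrite [(m - k) * _]mulnC -mulnA leq_mul2l h1 orbT.
by rewrite mulnCA -[m * m.-1 * B]mulnA leq_mul2l h2 orbT.
Qed.

End Core.

Section SecC.
Local Open Scope ring_scope.
Local Open Scope ring_scope.

Lemma arithR (R : realFieldType) (M K NN BB GG p q : R) :
  (M - K) * (K - 1) * NN <= M * (M - 1) * BB -> NN = GG + BB -> 0 <= BB -> 0 <= GG ->
  K <= M -> 2 <= K -> 0 < NN -> (1 - q) * NN <= GG -> 0 <= p -> p < 1 ->
  (1 - p) * M <= K -> 1 < M ->
  (1 - (q + 3 * (2 * q / (1 - p)))) * M <= K.
Proof.
move=> hc hN B0 G0 KM K2 NR hq p0 p1 hk M1.
set rho := 2 * q / (1 - p).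
have pp : 0 < 1 - p by lra.
have hrho : rho * (1 - p) = 2 * q by rewrite /rho mulfVK // lt0r_neq0.
have Bq : BB <= q * NN by lra.
have q0 : 0 <= q.
  have : 0 <= q * NN by lra.
  by rewrite pmulr_lge0.
have rho0 : 0 <= rho by rewrite /rho divr_ge0 // ?mulr_ge0 //; lra.
have b0 : 0 <= M * (M - 1) by rewrite mulr_ge0 //; lra.
have hc2 : (M - K) * (K - 1) <= M * (M - 1) * q.
  rewrite -(ler_pM2r NR); apply: le_trans hc _.
  rewrite -!mulrA; apply: ler_wpM2l; first lra.
  by apply: ler_wpM2l; first lra.
have e1 : (M - K) * ((1 - p) * M) <= (M - K) * K by apply: ler_wpM2l => //; lra.
have e2 : (M - K) * K <= 2 * ((M - K) * (K - 1)).
  have : 0 <= (M - K) * (K - 2) by apply: mulr_ge0; lra.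
  lra.
have e3 : M * (M - 1) * q <= M * M * q.
  apply: ler_wpM2r => //; apply: ler_wpM2l; lra.
have h3 : ((M - K) * (1 - p)) * M <= (2 * q * M) * M.
  have -> : ((M - K) * (1 - p)) * M = (M - K) * ((1 - p) * M) by ring.
  have -> : (2 * q * M) * M = 2 * (M * M * q) by ring.
  lra.
have h4 : (M - K) * (1 - p) <= 2 * q * M by rewrite -(ler_pM2r (x := M)) //; lra.
have h5 : M - K <= rho * M.
  rewrite -hrho in h4.
  by rewrite -(ler_pM2r pp) mulrAC.
have : 0 <= (q + 2 * rho) * M by apply: mulr_ge0; lra.
lra.
Qed.

End SecC.


Section Tr.
Variable n : nat.
Local Notation pos := ('I_n * 'I_n)%type.
Definition swp (u : pos) : pos := (u.2, u.1).
Definition tr (D : {set pos}) : {set pos} := swp @^-1: D.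

Lemma swpK : involutive swp. Proof. by case. Qed.
Lemma trK : involutive tr.
Proof. by move=> D; apply/setP=> u; rewrite !inE swpK. Qed.
Lemma tr_inj : injective tr. Proof. exact: inv_inj trK. Qed.
Lemma card_tr A : #|tr A| = #|A|.
Proof. by rewrite card_preimset //; apply: inv_inj swpK. Qed.

Lemma gd_tr (X Y : {set 'I_n}) D : is_gdiag Y X (tr D) = is_gdiag X Y D.
Proof.
rewrite /is_gdiag.
have -> : (tr D \subset setX Y X) = (D \subset setX X Y).
  apply/subsetP/subsetP=> h u.
    move=> uD; have := h (swp u); rewrite !inE swpK => /(_ uD).
    by rewrite /swp /= andbC.
  by rewrite !inE /swp /= => /h; rewrite !inE andbC.
have e1 : forall y, [set x | (y, x) \in tr D] = [set x | (x, y) \in D].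
  by move=> y; apply/setP=> x; rewrite !inE.
have e2 : forall x, [set y | (y, x) \in tr D] = [set y | (x, y) \in D].
  by move=> x; apply/setP=> y; rewrite !inE.
have f1 : [forall x in Y, #|[set y | (x, y) \in tr D]| == 1%N] =
          [forall y in Y, #|[set x | (x, y) \in D]| == 1%N].
  by apply: eq_forallb => x; rewrite e1.
have f2 : [forall y in X, #|[set x | (x, y) \in tr D]| == 1%N] =
          [forall x in X, #|[set y | (x, y) \in D]| == 1%N].
  by apply: eq_forallb => x; rewrite e2.
rewrite f1 f2; congr (_ && _); exact: andbC.
Qed.

Lemma good_tr L D : good_diag (tr L) (tr D) = good_diag L D.
Proof.
rewrite /good_diag; have -> : tr D :&: tr L = tr (D :&: L).
  by apply/setP=> u; rewrite !inE.
by rewrite card_tr.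
Qed.

Lemma card_gd_tr (X Y : {set 'I_n}) (P : {set pos} -> bool) :
  #|[set D in gdiags Y X | P (tr D)]| = #|[set D in gdiags X Y | P D]|.
Proof.
rewrite -(card_preimset _ tr_inj); apply: eq_card => D; rewrite !inE.
by rewrite -gd_tr trK.
Qed.

Lemma prob_tr (R : numFieldType) L (X Y : {set 'I_n}) :
  prob_good R (tr L) Y X = prob_good R L X Y.
Proof.
rewrite /prob_good.
have -> : [set D in gdiags Y X | good_diag (tr L) D] =
          [set D in gdiags Y X | good_diag L (tr D)].
  by apply/setP=> D; rewrite !inE -good_tr trK.
rewrite card_gd_tr.
have := card_gd_tr X Y (fun _ => true).
have -> : [set D in gdiags Y X | true] = gdiags Y X by apply/setP=> D; rewrite !inE andbT.
have -> : [set D in gdiags X Y | true] = gdiags X Y by apply/setP=> D; rewrite !inE andbT.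
by move=> ->.
Qed.
End Tr.

Section SecE.
Local Open Scope ring_scope.
Local Open Scope ring_scope.

Lemma row_case (R : realFieldType) n (X Y : {set 'I_n}) (L : {set 'I_n * 'I_n}) i (p q : R) :
  #|X| = #|Y| -> i \in X -> 1 - q <= prob_good R L X Y -> 0 <= p -> p < 1 ->
  (1 - p) * (#|Y|)%:R <= (#|[set j in Y | (i, j) \in L]|)%:R ->
  6 <= (#|X|)%:R :> R -> 1 < (1 - p) * (#|X|)%:R ->
  (1 - (q + 3 * (2 * q / (1 - p)))) * (#|Y|)%:R <= (#|[set j in Y | (i, j) \in L]|)%:R.
Proof.
move=> c iX hq p0 p1 hk m6 hm.
have hc := core L c iX.
move: hk hc hq; rewrite -c /prob_good.
set m := #|X|; set k := #|[set j in Y | (i, j) \in L]|.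
set N := #|gdiags X Y|.
set B := #|[set D in gdiags X Y | ~~ good_diag L D]|.
set G := #|[set D in gdiags X Y | good_diag L D]|.
move=> hk hc hq.
have hN : N = (G + B)%N by rewrite /N /G /B part_card.
have km : (k <= m)%N.
  rewrite /k /m c; apply: subset_leq_card; apply/subsetP=> j; rewrite inE => /andP [].
  by [].
have pp : 0 < 1 - p by lra.
have [N0|Npos] := eqVneq N 0%N.
  move: hq; rewrite N0 invr0 mulr0 => q1.
  have rho0 : 0 <= 2 * q / (1 - p) by apply: divr_ge0; lra.
  have k0 : 0 <= k%:R :> R by apply: ler0n.
  have : (1 - (q + 3 * (2 * q / (1 - p)))) * m%:R <= 0.
    by apply: mulr_le0_ge0; [lra | apply: ler0n].
  lra.
have NR : 0 < N%:R :> R by rewrite ltr0n lt0n.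
have k2 : (1 < k)%N by rewrite -(ltr_nat R); lra.
have m1 : (1 <= m)%N by lia.
apply: (@arithR R m%:R k%:R N%:R B%:R G%:R p q) => //.
- move: hc; rewrite -(ler_nat R) !natrM natrB // -!subn1 !natrB //; lia.
- by rewrite hN natrD.
- by rewrite ler_nat.
- by rewrite ler_nat.
- by rewrite -ler_pdivlMr.
- lra.
Qed.

End SecE.

Local Open Scope ring_scope.
Local Open Scope ring_scope.

Theorem lemma2p13 (R : realFieldType) (n : nat) (L : {set 'I_n * 'I_n})
  (X Y : {set 'I_n}) (p q : R) (l : line n) :
  q_good q L X Y ->
  0 <= p -> p < 1 ->
  strong_line p L X Y l ->
  let m : R := (#|X|)%:R in
  let rho : R := 2 * q / (1 - p) in
  6 <= m -> 1 < (1 - p) * m -> 1 < 2 * rho * m -> rho <= 1 / 2 ->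
  strong_line (q + 3 * rho) L X Y l.
Proof.
move=> [c hq] p0 p1 hs m rho m6 hm hr hrh.
case: l hs => [i|j] /= [iX hk]; split => //.
  exact: (row_case c iX).
have e : [set i0 in X | (j, i0) \in tr L] = [set i0 in X | (i0, j) \in L].
  by apply/setP=> x; rewrite !inE.
rewrite -e; apply: (row_case (esym c)) => //.
- by rewrite prob_tr.
- by rewrite e.
- by rewrite -c.
- by rewrite -c.
Qed.
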